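(* The family of recursively enumerable safety constraints is a family with a universal detector, i.e. there is a detector $u$ such that $\{C_u(x):x\in|u|\}$ is exactly the set of recursively enumerable safety constraints.
   Context: Fix a finite nonempty set $N$; $N^+$ the nonempty finite words, $N^{\mathbb N}$ the streams; $s[m{:}]$ the suffix; $n^{-1}\cdot A=\{u:nu\in A\}$; a set of words is prefix-free if no proper prefix (including the empty word) of a member is a member. Let $\mathbf 1=\{\Downarrow\}$. A detector is a set $|a|$ with $a:|a|\to(\mathbf 1+|a|)^N$. The final detector $\omega$ has carrier $\Omega$ = the set of prefix-free subsets of $N^+$, with $\omega(P)(n)=\Downarrow$ if $n\in P$, else $n^{-1}\cdot P$. For $s\in N^{\mathbb N}$, $\mathrm{Join}([s],a)$ maps $(t,y)\in\{s[k{:}]\}\times|a|$ to $\Downarrow$ if $a(y)(t(0))=\Downarrow$, else $(t[1{:}],a(y)(t(0)))$; iterates $g^{(1)}=g$, $g^{(k+1)}(z)=\Downarrow$ if $g^{(k)}(z)=\Downarrow$, else $g(g^{(k)}(z))$. $C_a(x)=\{s:\mathrm{Join}([s],a)^{(k)}(s,x)\ne\Downarrow\ \forall k\ge1\}$. A safety constraint $S$ is recursively enumerable if $S=C_\omega(P)$ for some $P\in\Omega$ that is a recursively enumerable set of words. A family $\mathcal F$ of safety constraints is a family with a universal detector if $\mathcal F=\{C_a(x):x\in|a|\}$ for some detector $a$. *)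

(* Defs.v *)
From Stdlib Require Import ClassicalEpsilon.
From mathcomp Require Import all_boot.

Set Implicit Arguments.
Unset Strict Implicit.
Unset Printing Implicit Defensive.

Inductive recf : Type :=
| RZero : recf
| RSucc : recf
| RProj : nat -> recf
| RComp : recf -> list recf -> recf
| RPrim : recf -> recf -> recf
| RMu   : recf -> recf.

Inductive reval : recf -> list nat -> nat -> Prop :=
| ev_zero xs : reval RZero xs 0
| ev_succ xs : reval RSucc xs (head 0 xs).+1
| ev_proj i xs : reval (RProj i) xs (nth 0 xs i)
| ev_comp f gs xs ys z :
    List.Forall2 (fun g y => reval g xs y) gs ys ->
    reval f ys z -> reval (RComp f gs) xs z
| ev_prim0 f g xs z : reval f xs z -> reval (RPrim f g) (0 :: xs) z
| ev_primS f g n xs y z :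
    reval (RPrim f g) (n :: xs) y -> reval g (n :: y :: xs) z ->
    reval (RPrim f g) (n.+1 :: xs) z
| ev_mu f xs n :
    reval f (n :: xs) 0 ->
    (forall m, m < n -> exists k, reval f (m :: xs) k.+1) ->
    reval (RMu f) xs n.

Definition re_nat (A : nat -> Prop) : Prop :=
  exists c : recf, forall k, A k <-> exists y, reval c [:: k] y.

(* Words over the finite alphabet N (= T : finType), streams.          *)

(* Bijective base-#|T| coding of words (first letter = least significant). *)
Definition word_code (T : finType) (w : seq T) : nat :=
  foldr (fun a acc => (nat_of_ord (enum_rank a)).+1 + #|T| * acc) 0 w.

Definition re_words (T : finType) (P : seq T -> Prop) : Prop :=
  re_nat (fun k => exists w, word_code w = k /\ P w).

Definition stream (T : Type) := nat -> T.

Definition suffix (T : Type) (s : stream T) (m : nat) : stream T :=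
  fun i => s (m + i).

Definition deriv (T : Type) (n : T) (A : seq T -> Prop) : seq T -> Prop :=
  fun u => A (n :: u).

Definition prefix_free (T : Type) (P : seq T -> Prop) : Prop :=
  forall w, P w -> forall k, k < size w -> ~ P (take k w).

Definition Omega (T : Type) := { P : seq T -> Prop | prefix_free P }.

(* Detectors: a : |a| -> (1 + |a|)^N, with None standing for the halt  *)
(* symbol.                                                              *)

Record detector (T : Type) := Detector {
  carrier :> Type;
  dstep : carrier -> T -> option carrier
}.

Lemma deriv_prefix_free (T : Type) (P : seq T -> Prop) (n : T) :
  prefix_free P -> ~ P [:: n] -> prefix_free (deriv n P).
Proof.
move=> pf nPn w Pw k lt_k.
exact: (pf (n :: w) Pw k.+1 lt_k).
Qed.

Definition omega_step (T : Type) (P : Omega T) (n : T) : option (Omega T) :=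
  match excluded_middle_informative (proj1_sig P [:: n]) with
  | left _ => None
  | right h => Some (exist _ (deriv n (proj1_sig P))
                          (deriv_prefix_free (proj2_sig P) h))
  end.

Definition omega (T : Type) : detector T := @Detector T (Omega T) (@omega_step T).

(* Join([s], a) on states (t, y), t a suffix of s. *)
Definition join (T : Type) (a : detector T)
    (z : stream T * a) : option (stream T * a) :=
  match dstep z.2 (z.1 0) with
  | None => None
  | Some y' => Some (suffix z.1 1, y')
  end.

Fixpoint giter (Z : Type) (g : Z -> option Z) (k : nat) (z : Z) : option Z :=
  match k with
  | 0 => Some z
  | k'.+1 => match giter g k' z with None => None | Some z' => g z' end
  end.

Definition C (T : Type) (a : detector T) (x : a) : stream T -> Prop :=
  fun s => forall k, 1 <= k -> giter (@join T a) k (s, x) <> None.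

Definition re_safety (T : finType) (S : stream T -> Prop) : Prop :=
  exists P : Omega T, re_words (proj1_sig P) /\
    (forall s, S s <-> @C T (omega T) P s).

(* Main.v *)
Require Import Defs.
From Stdlib Require Import ClassicalEpsilon.
From mathcomp Require Import all_boot.
From mathcomp Require Import zify.
Set Implicit Arguments.
Unset Strict Implicit.

Lemma comp1_inv f g xs z : reval (RComp f [:: g]) xs z -> exists y, reval g xs y /\ reval f [:: y] z.
Proof.
move=> H; inversion H; subst. inversion H2; subst. inversion H6; subst. by exists y.
Qed.
Lemma comp1_intro f g xs y z : reval g xs y -> reval f [:: y] z -> reval (RComp f [:: g]) xs z.
Proof. move=> H1 H2. apply: (@ev_comp _ _ _ [:: y]) => //. by constructor; [|constructor]. Qed.
Lemma succ_inv ys z : reval RSucc ys z -> z = (head 0 ys).+1.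
Proof. by move=> H; inversion H. Qed.
Lemma proj_inv i ys z : reval (RProj i) ys z -> z = nth 0 ys i.
Proof. by move=> H; inversion H. Qed.
Lemma zero_inv ys z : reval RZero ys z -> z = 0.
Proof. by move=> H; inversion H. Qed.
Lemma prim0_inv f g xs z : reval (RPrim f g) (0 :: xs) z -> reval f xs z.
Proof. by move=> H; inversion H. Qed.
Lemma primS_inv f g n xs z : reval (RPrim f g) (n.+1 :: xs) z ->
  exists y, reval (RPrim f g) (n :: xs) y /\ reval g (n :: y :: xs) z.
Proof. move=> H; inversion H; subst. by exists y. Qed.

Fixpoint addp (i a : nat) : recf :=
  match a with 0 => RProj i | a'.+1 => RComp RSucc [:: addp i a'] end.

Lemma addp_ok i a xs y : reval (addp i a) xs y <-> y = nth 0 xs i + a.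
Proof.
elim: a y => [|a IH] y /=.
  split; first by move/proj_inv ->; rewrite addn0.
  by rewrite addn0 => ->; constructor.
split.
  case/comp1_inv=> z [/IH -> /succ_inv ->]. by rewrite addnS.
move=> ->. apply: (@comp1_intro _ _ _ (nth 0 xs i + a)); first exact/IH.
by rewrite addnS; apply: (ev_succ [:: nth 0 xs i + a]).
Qed.

Definition mulb (b : nat) : recf := RPrim RZero (addp 1 b).

Lemma mulb_ok b n xs y : reval (mulb b) (n :: xs) y <-> y = n * b.
Proof.
elim: n y => [|n IH] y.
  split; first by move/prim0_inv/zero_inv.
  by move=> ->; constructor; constructor.
split.
  case/primS_inv=> z [/IH -> /addp_ok /= ->]. by rewrite mulSn addnC.
move=> ->. apply: (@ev_primS _ _ _ _ (n * b)); first exact/IH.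
by apply/addp_ok => /=; rewrite mulSn addnC.
Qed.

Definition affine (a b : nat) : recf := RComp (addp 0 a) [:: mulb b].

Lemma affine_ok a b k y : reval (affine a b) [:: k] y <-> y = a + b * k.
Proof.
split.
  case/comp1_inv=> z [/mulb_ok -> /addp_ok /= ->]. by rewrite mulnC addnC.
move=> ->. apply: (@comp1_intro _ _ _ (k * b)); first exact/mulb_ok.
by apply/addp_ok => /=; rewrite mulnC addnC.
Qed.

Lemma re_nat_affine (A : nat -> Prop) a b :
  re_nat A -> re_nat (fun k => A (a + b * k)).
Proof.
case=> c Hc. exists (RComp c [:: affine a b]) => k.
rewrite Hc; split.
  case=> y Hy. exists y. apply: (@comp1_intro _ _ _ (a + b * k)) => //.
  exact/affine_ok.
case=> y /comp1_inv [z [/affine_ok -> H]]. by exists y.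
Qed.

Section Words.
Variable T : finType.
Hypothesis hT : 0 < #|T|.

Lemma code_cons (n : T) v :
  word_code (n :: v) = (nat_of_ord (enum_rank n)).+1 + #|T| * word_code v.
Proof. by []. Qed.

Lemma code_inj : injective (@word_code T).
Proof.
elim=> [|a w IH] [|a2 w2] //=.
move=> H; have : (enum_rank a : nat) + #|T| * word_code w =
                  (enum_rank a2 : nat) + #|T| * word_code w2.
  by rewrite !addSn in H; case: H.
move=> E.
have ea : (enum_rank a : nat) = enum_rank a2.
  move: (congr1 (modn^~ #|T|) E).
  by rewrite !(addnC (nat_of_ord _)) !(mulnC #|T|) !modnMDl !modn_small.
have ew : word_code w = word_code w2.
  rewrite ea in E. move/addnI: E => /eqP. rewrite eqn_mul2l.
  by case/orP => [/eqP H0|/eqP //]; move: hT; rewrite H0.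
rewrite (IH _ ew). by move/val_inj/enum_rank_inj: ea => ->.
Qed.

Lemma code_surj k : exists w : seq T, word_code w = k.
Proof.
elim: k {-2}k (leqnn k) => [|K IH] k.
  by rewrite leqn0 => /eqP ->; exists [::].
case: k => [|m] Hk; first by exists [::].
have Hr : m %% #|T| < #|T| by rewrite ltn_mod.
have [w Hw] : exists w : seq T, word_code w = m %/ #|T|.
  apply: IH. rewrite ltnS in Hk. apply: leq_trans Hk. exact: leq_div.
exists (enum_val (Ordinal Hr) :: w).
rewrite code_cons enum_valK /= Hw addSn. congr _.+1.
by rewrite addnC mulnC -divn_eq.
Qed.

Lemma re_words_deriv (P : seq T -> Prop) (n : T) :
  re_words P -> re_words (deriv n P).
Proof.
rewrite /re_words => H.
have := re_nat_affine (nat_of_ord (enum_rank n)).+1 #|T| H.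
case=> c Hc; exists c => k; rewrite -Hc; split.
  case=> v [<- Pv]. by exists (n :: v).
case=> w [Ew Pw]. have [v Hv] := code_surj k. exists v; split => //.
rewrite /deriv. suff -> : n :: v = w by [].
by apply: code_inj; rewrite code_cons Hv.
Qed.
End Words.

Section Det.
Variable T : finType.
Hypothesis hT : 0 < #|T|.

Definition UC := { P : Omega T | re_words (proj1_sig P) }.

Definition ustep (x : UC) (n : T) : option UC :=
  match excluded_middle_informative (proj1_sig (proj1_sig x) [:: n]) with
  | left _ => None
  | right h => Some (exist _ (exist _ (deriv n (proj1_sig (proj1_sig x)))
                          (deriv_prefix_free (proj2_sig (proj1_sig x)) h))
                       (re_words_deriv hT n (proj2_sig x)))
  end.

Definition udet : detector T := @Detector T UC ustep.

Lemma ustep_omega (x : UC) n :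
  omega_step (proj1_sig x) n = option_map (@proj1_sig _ _) (ustep x n).
Proof.
rewrite /omega_step /ustep. by case: excluded_middle_informative.
Qed.

Lemma giter_u (x : udet) s k :
  giter (@join T (omega T)) k (s, proj1_sig x) =
  option_map (fun p : stream T * udet => (p.1, proj1_sig p.2))
    (giter (@join T udet) k (s, x)).
Proof.
elim: k => [|k IH] //=. rewrite IH.
case: (giter _ k (s, x)) => [[t y]|] //=.
rewrite /join /= ustep_omega. by case: (ustep y (t 0)).
Qed.

Lemma C_u (x : udet) s : C x s <-> @C T (omega T) (proj1_sig x) s.
Proof.
rewrite /C; split=> H k Hk; move: (H k Hk).
  by rewrite giter_u; case: giter.
by rewrite giter_u; case: giter.
Qed.
End Det.

Theorem mainTheorem19 (T : finType) (hT : 0 < #|T|) :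
  exists u : detector T,
    forall S : stream T -> Prop,
      re_safety S <-> exists x : u, forall s, S s <-> @C T u x s.
Proof.
exists (udet hT) => S; split.
  case=> P [HP HS]. exists (exist _ P HP : udet hT) => s.
  by rewrite HS C_u.
case=> x Hx. exists (proj1_sig x); split; first exact: (proj2_sig x).
by move=> s; rewrite Hx C_u.
Qed.
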